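(* Let $T$ be a rooted tree with root $v$, with $n$ vertices and $l$ leaves, where the root is not counted as a leaf. Then $\alpha(T,v)\ge n-l-1+2^l$.
   Context: All trees are finite. Here a leaf is a non-root vertex of degree 1 (the root is never counted as a leaf, even if it has degree 1). A subtree is a nonempty vertex set inducing a connected subgraph, and $\alpha(T,v)$ is the number of subtrees of $T$ containing $v$. *)

(* Defs.v *)
From mathcomp Require Import all_boot.
Set Implicit Arguments. Unset Strict Implicit. Unset Printing Implicit Defensive.

Section Trees.
Variable T : finType.
Variable e : rel T.

Definition simple_graph : Prop := symmetric e /\ irreflexive e.

Definition connected_graph : Prop := forall x y : T, connect e x y.

(* a cycle: distinct vertices x :: p, at least 3 of them, consecutive ones
   adjacent and the last one adjacent to x *)
Definition has_cycle : Prop :=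
  exists (x : T) (p : seq T),
    [/\ 2 <= size p, uniq (x :: p), path e x p & e (last x p) x].

Definition is_tree : Prop := [/\ simple_graph, connected_graph & ~ has_cycle].

Definition degree (x : T) : nat := #|[set y | e x y]|.

Definition leaves (r : T) : {set T} := [set x | (x != r) && (degree x == 1)].

Definition induced (S : {set T}) : rel T :=
  fun a b => [&& e a b, a \in S & b \in S].

Definition is_subtree (S : {set T}) : bool :=
  (S != set0) && [forall x in S, forall y in S, connect (induced S) x y].

Definition alpha (v : T) : nat := #|[set S : {set T} | (v \in S) && is_subtree S]|.

End Trees.

(* Main.v *)
Require Import Defs.
From mathcomp Require Import all_boot.
From mathcomp Require Import zify.
Set Implicit Arguments.

Lemma deg2 (T : finType) (e : rel T) (y a b : T) :
  e y a -> e y b -> a != b -> 1 < degree e y.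
Proof.
move=> ha hb nab; rewrite /degree.
have: [set a; b] \subset [set z | e y z].
  by apply/subsetP=> z; rewrite !inE => /orP[]/eqP->.
by move/subset_leq_card; rewrite cards2 nab.
Qed.

Lemma keep (T : finType) (e : rel T) (S : {set T}) :
  symmetric e -> (forall y, y \notin S -> degree e y <= 1) ->
  forall p x, path e x p -> uniq (x :: p) -> x \in S -> last x p \in S ->
  path (induced e S) x p.
Proof.
move=> sym hS; elim=> [|y p IH] x //=.
case/andP=> exy pth /andP[]; rewrite inE negb_or => /andP[nxy nxp] up xS lS.
have yS : y \in S.
  move: IH pth up lS nxp; case: p => [|z p] IH pth up lS nxp; first by [].
  case/andP: pth => eyz _.
  apply/negPn/negP => /hS.
  have nxz : x != z by move: nxp; rewrite inE negb_or => /andP[].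
  by rewrite leqNgt (@deg2 _ _ y x z) // sym.
by rewrite /induced exy xS yS /= IH.
Qed.

Lemma connS (T : finType) (e : rel T) (S : {set T}) :
  symmetric e -> connected_graph e ->
  (forall y, y \notin S -> degree e y <= 1) ->
  forall x y, x \in S -> y \in S -> connect (induced e S) x y.
Proof.
move=> sym con hS x y xS yS.
case/connectP: (con x y) => p pth ey; subst y.
case: (shortenP pth) yS => p' pth' up' _ yS.
apply/connectP; exists p' => //.
by apply: keep.
Qed.

Definition comp (T : finType) (e : rel T) (A : {set T}) (v : T) : {set T} :=
  [set x | connect (induced e A) v x].

Lemma comp_step (T : finType) (e : rel T) (A : {set T}) (v x y : T) :
  x \in comp e A v -> e x y -> x \in A -> y \in A -> y \in comp e A v.
Proof.
rewrite !inE => hx exy xA yA.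
apply: (connect_trans hx); apply: connect1; by rewrite /induced exy xA yA.
Qed.

Lemma comp_subtree (T : finType) (e : rel T) (A : {set T}) (v : T) :
  symmetric e -> is_subtree e (comp e A v).
Proof.
move=> sym; set C := comp e A v.
have vC : v \in C by rewrite inE connect0.
have symC : symmetric (induced e C).
  by move=> a b; rewrite /induced sym; case: (a \in C); case: (b \in C).
have H : forall p a, a \in C -> path (induced e A) a p -> path (induced e C) a p.
  elim=> [|b p IH] a //= aC /andP[/and3P[eab aA bA] pth].
  have bC : b \in C by apply: (comp_step aC).
  by rewrite /induced eab aC bC /= IH.
have hv : forall x, x \in C -> connect (induced e C) v x.
  move=> x; rewrite inE => /connectP[p pth ->].
  by apply/connectP; exists p => //; apply: H.
apply/andP; split; first by apply/set0Pn; exists v.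
apply/forallP => x; apply/implyP => xC; apply/forallP => y; apply/implyP => yC.
apply: (connect_trans _ (hv y yC)).
by rewrite (sym_connect_sym symC) hv.
Qed.

Lemma notin_comp (T : finType) (e : rel T) (A : {set T}) (v u : T) :
  u != v -> u \notin A -> u \notin comp e A v.
Proof.
move=> uv uA; apply/negP; rewrite inE => /connectP [p pth equ].
move: pth equ; case/lastP: p => [|q z] /=.
  by move=> _ equ; rewrite equ eqxx in uv.
rewrite last_rcons rcons_path => /andP[_ /and3P[_ _ zA]] equ.
by rewrite equ zA in uA.
Qed.

Lemma split_lem (T : finType) (e : rel T) (v u w : T) :
  u != w ->
  forall p x, x \in comp e (~: [set u]) v -> x \in comp e (~: [set w]) v ->
  x != u -> x != w -> path e x p -> last x p = u ->
  (w \in comp e (~: [set u]) v) || (u \in comp e (~: [set w]) v).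
Proof.
move=> uw; elim=> [|y p IH] x xu xw nxu nxw /=.
  by move=> _ exu; rewrite exu eqxx in nxu.
case/andP=> exy pth lst.
case: (eqVneq y u) => [yu|nyu].
  subst y; apply/orP; right; apply: (comp_step xw exy); by rewrite !inE // eq_sym.
case: (eqVneq y w) => [yw|nyw].
  subst y; apply/orP; left; apply: (comp_step xu exy); by rewrite !inE // eq_sym.
apply: (IH y) => //.
  by apply: (comp_step xu exy); rewrite !inE.
by apply: (comp_step xw exy); rewrite !inE.
Qed.

Unset Implicit Arguments.

Theorem mainTheorem9 (T : finType) (e : rel T) (v : T) :
  is_tree e ->
  #|T| - #|leaves e v| - 1 + 2 ^ #|leaves e v| <= alpha e v.
Proof.
case=> [[sym irr] con _].
set L := leaves e v.
have vL : v \notin L by rewrite !inE eqxx.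
set U := ~: (v |: L).
set G1 := [set ~: M | M in powerset L].
set G2 := [set comp e (~: [set u]) v | u in U].
have c1 : #|G1| = 2 ^ #|L| by rewrite card_imset ?card_powerset //; apply: setC_inj.
have c2 : #|G2| = #|U|.
  apply: card_in_imset => u w; rewrite !inE !negb_or => /andP[uv uL] /andP[wv wL] Cuw.
  case: (eqVneq u w) => // nuw; exfalso.
  have vC : forall A, v \in comp e A v by move=> A; rewrite inE connect0.
  case/connectP: (con v u) => p pth equ.
  have nvu : v != u by rewrite eq_sym.
  have nvw : v != w by rewrite eq_sym.
  have := split_lem (e:=e) (v:=v) nuw p (vC _) (vC _) nvu nvw pth (esym equ).
  case/orP => h.
    have nC : w \notin comp e (~: [set w]) v by apply: notin_comp; rewrite ?inE ?eqxx.
    by rewrite Cuw (negbTE nC) in h.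
  have nC : u \notin comp e (~: [set u]) v by apply: notin_comp; rewrite ?inE ?eqxx.
  by rewrite -Cuw (negbTE nC) in h.
have dis : G1 :&: G2 = set0.
  apply/eqP; rewrite -subset0; apply/subsetP => S; rewrite !inE.
  case/andP => /imsetP[M ML ->] /imsetP[u uU eq].
  move: uU; rewrite !inE negb_or => /andP[uv uL].
  have uM : u \in ~: M.
    rewrite inE; apply/negP => uM; move: ML; rewrite powersetE => /subsetP /(_ u uM).
    by rewrite inE => h; rewrite h in uL.
  have nC : u \notin comp e (~: [set u]) v by apply: notin_comp; rewrite ?inE ?eqxx.
  by rewrite eq (negbTE nC) in uM.
have sub : G1 :|: G2 \subset [set S : {set T} | (v \in S) && is_subtree e S].
  apply/subsetP => S; rewrite !inE => /orP[/imsetP[M ML ->] | /imsetP[u uU ->]].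
    have vM : v \in ~: M.
      rewrite inE; apply/negP => vM; move: ML; rewrite powersetE => /subsetP /(_ v vM).
      by rewrite (negbTE vL).
    rewrite vM /=; apply/andP; split; first by apply/set0Pn; exists v.
    apply/forallP => x; apply/implyP => xS; apply/forallP => y; apply/implyP => yS.
    apply: connS => // z; rewrite inE negbK => zM.
    move: ML; rewrite powersetE => /subsetP /(_ z zM); rewrite inE => /andP[_ /eqP->].
    by [].
  by rewrite inE connect0 comp_subtree.
have := subset_leq_card sub; rewrite cardsU dis cards0 subn0 c1 c2 /alpha.
have h1 := cardsC (v |: L); have h2 := cardsU1 v L; rewrite vL /= in h2.
rewrite -/U in h1; lia.
Qed.
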